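(* Let $M$ be a finite-dimensional left $\mathsf{VBr}_{r,t}(\omega)$-module with decomposition $M=\bigoplus_{\mathbf a,\mathbf i}1_{\mathbf a}M_{\mathbf i}$. Let $\mathbf a\in\mathrm{Seq}_{r,t}$, $k\in\{1,\dots,r+t-1\}$ with $\mathsf s_k\mathbf a\neq\mathbf a$, and $\mathbf i\in\mathbb C^{r+t}$. Let $I=\{\mathbf i'\in\mathbb C^{r+t}:\mathrm i'_j=\mathrm i_j\text{ for }j\ne k,k+1,\ \mathrm i'_k+\mathrm i'_{k+1}=0\}$. Then $e_k1_{\mathbf a}M_{\mathbf i}=\{0\}$ if $\mathrm i_k+\mathrm i_{k+1}\neq0$, and $e_k1_{\mathbf a}M_{\mathbf i}\subseteq\bigoplus_{\mathbf i'\in I}1_{\mathbf a}M_{\mathbf i'}$ if $\mathrm i_k+\mathrm i_{k+1}=0$; analogously $\hat e_k1_{\mathbf a}M_{\mathbf i}=\{0\}$ if $\mathrm i_k+\mathrm i_{k+1}\ne0$ and $\hat e_k1_{\mathbf a}M_{\mathbf i}\subseteq\bigoplus_{\mathbf i'\in I}1_{\mathsf s_k\mathbf a}M_{\mathbf i'}$ if $\mathrm i_k+\mathrm i_{k+1}=0$.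
   Context: $\mathrm{Seq}_{r,t}$: sequences $\mathbf a\in\{\wedge,\vee\}^{r+t}$ with exactly $r$ entries $\wedge$; $J=\{1,\dots,r+t-1\}$; $\mathsf s_k$ swaps entries $k,k+1$. $\mathrm{Br}_{r,t}(\gamma)$: basis oriented Brauer diagrams $\mathbf a\to\mathbf b$ (perfect matchings between bottom row labelled $\mathbf a$ and top row labelled $\mathbf b$; bottom-to-top strands join equal labels, strands within a row join different labels), product by stacking (second factor below), $0$ if labels mismatch, loops replaced by $\gamma$. $1_{\mathbf a}$ identity; for $k\in J$: if $a_k=a_{k+1}$, $s_k1_{\mathbf a}$ crosses strands $k,k+1$ ($\mathbf a\to\mathbf a$); if $a_k\neq a_{k+1}$, $\hat s_k1_{\mathbf a}$ crossing $\mathbf a\to\mathsf s_k\mathbf a$, $e_k1_{\mathbf a}$ cap at bottom $k,k+1$ and cup at top $k,k+1$ ($\mathbf a\to\mathbf a$), $\hat e_k1_{\mathbf a}$ same shape $\mathbf a\to\mathsf s_k\mathbf a$; these are $0$ when the condition fails; $s_k=\sum_{\mathbf a}s_k1_{\mathbf a}$ etc. For $\omega=(\omega_j)_{j\ge0}\subset\mathbb C$, $\mathsf{VBr}_{r,t}(\omega)$ is the quotient of the free product $\mathrm{Br}_{r,t}(\omega_0)*\mathbb C[y_1,\dots,y_{r+t}]$ by: $y_i$ commutes with all $1_{\mathbf a}$, and with $s_k,\hat s_k,e_k,\hat e_k$ when $i\notin\{k,k+1\}$; $e_1y_1^je_11_{\mathbf a}=\omega_je_11_{\mathbf a}$ for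 $j\ge0$ and $(a_1,a_2)=(\wedge,\vee)$; for $a_k=a_{k+1}$: $s_ky_k1_{\mathbf a}-y_{k+1}s_k1_{\mathbf a}=-1_{\mathbf a}$, $s_ky_{k+1}1_{\mathbf a}-y_ks_k1_{\mathbf a}=1_{\mathbf a}$; $\hat s_ky_k-y_{k+1}\hat s_k=\hat e_k$, $\hat s_ky_{k+1}-y_k\hat s_k=-\hat e_k$; $e_k,\hat e_k$ are annihilated on both sides by $y_k+y_{k+1}$. $1_{\mathbf a}M_{\mathbf i}=\{v\in1_{\mathbf a}M:(y_k-\mathrm i_k)^Nv=0\ \forall k,\ N\gg0\}$. *)

(* Defs.v *)
From HB Require Import structures.
From mathcomp Require Import all_boot all_order all_algebra all_fingroup.
From mathcomp Require Import complex.
From mathcomp Require Import reals Rstruct.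
Set Implicit Arguments. Unset Strict Implicit. Unset Printing Implicit Defensive.
Import GRing.Theory.
Local Open Scope ring_scope.

Definition C : closedFieldType := (Rdefinitions.R)[i].

(* Oriented Brauer diagrams on n = r + t points per row.               *)
(* Positions are 0-based: paper position j  <->  ordinal j-1.          *)
(* Labels: true = wedge (^), false = vee (v).                          *)
Section Brauer.
Variable n : nat.

Definition lab := {ffun 'I_n -> bool}.
(* points of a diagram: inl i = bottom row position i, inr i = top row *)
Definition pt := ('I_n + 'I_n)%type.

Record bdiag := BDiag { bbot : lab; btop : lab; bmat : {ffun pt -> pt} }.

Definition ptlab (d : bdiag) (p : pt) : bool :=
  match p with inl i => bbot d i | inr i => btop d i end.

Definition same_row (p q : pt) : bool :=
  match p, q with inl _, inl _ => true | inr _, inr _ => true | _, _ => false end.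

Definition inSeq (r : nat) (a : lab) : bool := #|[pred i | a i]| == r.

(* d is a basis oriented Brauer diagram  bbot d -> btop d *)
Definition bdiag_ok (r : nat) (d : bdiag) : bool :=
  [&& inSeq r (bbot d), inSeq r (btop d) &
   [forall p : pt, [&& bmat d p != p, bmat d (bmat d p) == p &
      if same_row p (bmat d p) then ptlab d p != ptlab d (bmat d p)
      else ptlab d p == ptlab d (bmat d p)]]].

(* Stacking d1 on top of d2 (d2 below).  Vertices: outer points
   (inl (inl i) = bottom of d2, inl (inr i) = top of d1) and the
   middle row (inr i = top of d2 = bottom of d1). *)
Definition vtx := (pt + 'I_n)%type.
Definition emb_lo (p : pt) : vtx :=
  match p with inl i => inl (inl i) | inr i => inr i end.
Definition emb_hi (p : pt) : vtx :=
  match p with inl i => inr i | inr i => inl (inr i) end.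

Definition cedge (d1 d2 : bdiag) : rel vtx := fun x y =>
  [exists p, (emb_lo p == x) && (emb_lo (bmat d2 p) == y)] ||
  [exists p, (emb_hi p == x) && (emb_hi (bmat d1 p) == y)].

Definition bcomp_mat (d1 d2 : bdiag) : {ffun pt -> pt} :=
  [ffun p => odflt p [pick q | (q != p) && connect (cedge d1 d2) (inl p) (inl q)]].

Definition bcomp (d1 d2 : bdiag) : bdiag := BDiag (bbot d2) (btop d1) (bcomp_mat d1 d2).

(* number of closed loops created by stacking *)
Definition bloops (d1 d2 : bdiag) : nat :=
  n_comp (cedge d1 d2)
    [pred v : vtx | if v is inr _ then
        [forall p : pt, ~~ connect (cedge d1 d2) v (inl p)] else false].

Definition idmat : {ffun pt -> pt} :=
  [ffun p => match p with inl i => inr i | inr i => inl i end].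
Definition bid (a : lab) : bdiag := BDiag a a idmat.

(* neighbour k+1 of position k (meaningful when (k.+1 < n)%N) *)
Definition nxt (k : 'I_n) : 'I_n := insubd k k.+1.
Definition sw (k : 'I_n) : 'I_n -> 'I_n := fun i => tperm k (nxt k) i.
Definition swlab (k : 'I_n) (a : lab) : lab := [ffun i => a (sw k i)].

Definition crmat (k : 'I_n) : {ffun pt -> pt} :=
  [ffun p => match p with inl i => inr (sw k i) | inr i => inl (sw k i) end].
(* cap at bottom k,k+1 and cup at top k,k+1 *)
Definition cupmat (k : 'I_n) : {ffun pt -> pt} :=
  [ffun p => match p with
    | inl i => if (i == k) || (i == nxt k) then inl (sw k i) else inr i
    | inr i => if (i == k) || (i == nxt k) then inr (sw k i) else inl i end].

Definition s_diag k a := BDiag a a (crmat k).              (* s_k 1_a, a_k = a_{k+1} *)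
Definition shat_diag k a := BDiag a (swlab k a) (crmat k).
Definition e_diag k a := BDiag a a (cupmat k).
Definition ehat_diag k a := BDiag a (swlab k a) (cupmat k).

End Brauer.

(* Finite-dimensional left VBr_{r,t}(om)-modules: M = F^dim (column   *)
(* vectors), rho = action of the basis diagrams of Br_{r,t}(om 0),    *)
(* Y i = action of y_{i+1}.                                            *)
Section VBr.
Variables (F : fieldType) (r t : nat) (om : nat -> F) (dim : nat).
Local Notation n := (r + t).
Variables (rho : bdiag n -> 'M[F]_dim) (Y : 'I_n -> 'M[F]_dim).

Definition One (a : lab n) := rho (bid a).
Definition Sop (k : 'I_n) : 'M[F]_dim :=
  \sum_(a : lab n | inSeq r a && (a k == a (nxt k))) rho (s_diag k a).
Definition Shat (k : 'I_n) : 'M[F]_dim :=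
  \sum_(a : lab n | inSeq r a && (a k != a (nxt k))) rho (shat_diag k a).
Definition Eop (k : 'I_n) : 'M[F]_dim :=
  \sum_(a : lab n | inSeq r a && (a k != a (nxt k))) rho (e_diag k a).
Definition Ehat (k : 'I_n) : 'M[F]_dim :=
  \sum_(a : lab n | inSeq r a && (a k != a (nxt k))) rho (ehat_diag k a).

Definition commutes (A B : 'M[F]_dim) := A *m B = B *m A.

Definition is_VBr_module : Prop :=
  (* rho is a unital algebra map from Br_{r,t}(om 0) *)
  [/\ (forall d1 d2 : bdiag n, bdiag_ok r d1 -> bdiag_ok r d2 ->
        rho d1 *m rho d2 =
        if btop d2 == bbot d1 then (om 0 ^+ bloops d1 d2) *: rho (bcomp d1 d2)
        else 0),
      \sum_(a : lab n | inSeq r a) One a = 1%:M,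
      (forall i j, commutes (Y i) (Y j)),
      (forall i (a : lab n), inSeq r a -> commutes (Y i) (One a)) &
  [/\
      (forall (k i : 'I_n), (k.+1 < n)%N -> i != k -> i != nxt k ->
        [/\ commutes (Y i) (Sop k), commutes (Y i) (Shat k),
            commutes (Y i) (Eop k) & commutes (Y i) (Ehat k)]),
      (forall (k : 'I_n) (a : lab n) (j : nat), val k = 0%N -> (k.+1 < n)%N ->
        inSeq r a -> a k = true -> a (nxt k) = false ->
        Eop k *m Y k ^+ j *m Eop k *m One a = om j *: rho (e_diag k a)),
      (forall (k : 'I_n) (a : lab n), (k.+1 < n)%N -> inSeq r a -> a k = a (nxt k) ->
        Sop k *m Y k *m One a - Y (nxt k) *m Sop k *m One a = - One a /\
        Sop k *m Y (nxt k) *m One a - Y k *m Sop k *m One a = One a),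
      (forall (k : 'I_n), (k.+1 < n)%N ->
        Shat k *m Y k - Y (nxt k) *m Shat k = Ehat k /\
        Shat k *m Y (nxt k) - Y k *m Shat k = - Ehat k) &
      (forall (k : 'I_n), (k.+1 < n)%N ->
        [/\ Eop k *m (Y k + Y (nxt k)) = 0, (Y k + Y (nxt k)) *m Eop k = 0,
            Ehat k *m (Y k + Y (nxt k)) = 0 & (Y k + Y (nxt k)) *m Ehat k = 0])]].

Definition in_wsp (a : lab n) (w : 'I_n -> F) (v : 'cV[F]_dim) : Prop :=
  (exists u, v = One a *m u) /\
  exists N : nat, forall j : 'I_n, (Y j - (w j)%:M) ^+ N *m v = 0.

(* v \in sum_{w in P} 1_a M_w  (finite sums of elements of the summands) *)
Definition in_wsp_sum (P : ('I_n -> F) -> Prop) (a : lab n) (v : 'cV[F]_dim) : Prop :=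
  exists (m : nat) (ws : 'I_m -> ('I_n -> F)) (vs : 'I_m -> 'cV[F]_dim),
    (forall l, P (ws l) /\ in_wsp a (ws l) (vs l)) /\ v = \sum_(l < m) vs l.

Definition Iset (k : 'I_n) (w : 'I_n -> F) (w' : 'I_n -> F) : Prop :=
  (forall j, j != k -> j != nxt k -> w' j = w j) /\ w' k + w' (nxt k) = 0.

End VBr.

(* Main.v *)
Require Import Defs.
From HB Require Import structures.
From mathcomp Require Import all_boot all_order all_algebra all_fingroup.
From mathcomp Require Import complex.
From mathcomp Require Import reals Rstruct.
From mathcomp Require Import ring zify.
Import GRing.Theory.
Local Open Scope ring_scope.
Lemma poly_decomp (F : fieldType) (s : seq F) :
  exists L : seq (F * {poly F}),
    (\prod_(z <- s) ('X - z%:P)) %| 1 - \sum_(pr <- L) pr.2 /\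
    forall pr, pr \in L ->
      (\prod_(z <- s) ('X - z%:P)) %| ('X - pr.1%:P) ^+ size s * pr.2.
Proof.
have key : forall m (s : seq F), (size s <= m)%N -> exists L : seq (F * {poly F}),
    (\prod_(z <- s) ('X - z%:P)) %| 1 - \sum_(pr <- L) pr.2 /\
    forall pr, pr \in L ->
      (\prod_(z <- s) ('X - z%:P)) %| ('X - pr.1%:P) ^+ size s * pr.2.
  elim=> [|m IH] [|l0 s'] //= Hs.
  - by exists [::]; rewrite big_nil dvd1p.
  - by exists [::]; rewrite big_nil dvd1p.
  set S := l0 :: s'.
  pose Q0 := \prod_(z <- S | z == l0) ('X - z%:P).
  pose R := \prod_(z <- S | z != l0) ('X - z%:P).
  have hP : \prod_(z <- S) ('X - z%:P) = Q0 * R.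
    by rewrite (bigID (pred1 l0)).
  have hQ0 : Q0 = ('X - l0%:P) ^+ count (pred1 l0) S.
    rewrite /Q0 (eq_bigr (fun _ => 'X - l0%:P)); last by move=> z /eqP ->.
    by rewrite big_const_seq; elim: (count _ _) => [|c IHc] //=; rewrite exprS IHc.
  have hR : R = \prod_(z <- filter (predC1 l0) S) ('X - z%:P) by rewrite big_filter.
  have hsz : (size (filter (predC1 l0) S) <= m)%N.
    by rewrite /S /= eqxx /= size_filter; apply: leq_trans (count_size _ _) _.
  have [L'' [H1 H2]] := IH _ hsz.
  rewrite -hR in H1 H2.
  have cop : coprimep Q0 R.
    rewrite hQ0; apply: coprimep_expl; rewrite coprimep_sym coprimep_XsubC.
    rewrite /root horner_prod prodf_seq_neq0; apply/allP => z _.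
    by apply/implyP => hz; rewrite hornerXsubC subr_eq0 eq_sym.
  have [[u1 u2] /= Hu] := Bezout_coprimepP _ _ cop.
  have : (u1 * Q0 + u2 * R) %| 1 by move: Hu => /andP [].
  case/dvdpP => h Hh.
  set a := h * u1; set b := h * u2.
  have E1 : 1 = a * Q0 + b * R by rewrite Hh /a /b; ring.
  exists ((l0, b * R) :: [seq (pr.1, pr.2 * (a * Q0)) | pr <- L'']).
  rewrite hP; split.
    rewrite big_cons big_map /= -mulr_suml.
    have -> : 1 - (b * R + (\sum_(i <- L'') i.2) * (a * Q0)) =
              (1 - \sum_(i <- L'') i.2) * (a * Q0).
      by rewrite {1}E1; ring.
    rewrite (mulrC Q0) (mulrC a) mulrA; apply: dvdp_mulr.
    by apply: dvdp_mul => //; apply: dvdpp.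
  move=> pr; rewrite inE => /orP [/eqP -> /= | /mapP [pr'' Hin ->] /=].
    rewrite mulrCA; apply: dvdp_mull.
    apply: dvdp_mul; last exact: dvdpp.
    by rewrite hQ0; apply: dvdp_exp2l; apply: count_size.
  have Hle : (size (filter (predC1 l0) S) <= size S)%N.
    by rewrite size_filter count_size.
  set e := size (filter (predC1 l0) S).
  rewrite (_ : (size s').+1 = size S) // -(subnK Hle) exprD.
  set X1 := ('X - pr''.1%:P) ^+ (size S - e).
  set X2 := ('X - pr''.1%:P) ^+ e.
  have -> : X1 * X2 * (pr''.2 * (a * Q0)) = (X1 * a) * ((X2 * pr''.2) * Q0) by ring.
  apply: dvdp_mull; rewrite (mulrC Q0 R); apply: dvdp_mul; last exact: dvdpp.
  exact: H2.
exact: key (leqnn _).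
Qed.
Section Mx.
Variable F : fieldType.
Variable d : nat.
Implicit Types (A B E Z : 'M[F]_d) (v : 'cV[F]_d).

Lemma comm_shift A B (a b : F) : A *m B = B *m A ->
  GRing.comm (A - a%:M) (B - b%:M).
Proof.
move=> h; rewrite /GRing.comm -!mulmxE !mulmxBl !mulmxBr h.
rewrite !mul_mx_scalar !mul_scalar_mx !scale_scalar_mx mulrC !opprB !addrA.
by rewrite [LHS]addrAC [RHS]addrAC [X in X + _ = _]addrAC.
Qed.

Lemma sum_nil A B v N : GRing.comm A B -> A ^+ N *m v = 0 -> B ^+ N *m v = 0 ->
  (A + B) ^+ (N + N) *m v = 0.
Proof.
move=> cAB hA hB; rewrite exprDn_comm // mulmx_suml big1 // => i _.
rewrite -mulr_natl -!mulmxE -!mulmxA.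
have [leNi|ltiN] := leqP N i.
  by rewrite -(subnK leNi) exprD -mulmxE -mulmxA hB !mulmx0.
have e : A ^+ (N + N - i) *m B ^+ i = B ^+ i *m A ^+ (N + N - i).
  by rewrite mulmxE; apply: commrX; apply: commr_sym; apply: commrX.
rewrite (mulmxA (A ^+ _)) e -mulmxA -addnBAC ?(ltnW ltiN) // exprD -mulmxE -!mulmxA hA.
by rewrite !mulmx0.
Qed.

Lemma case1 E A B (a b : F) v N : E *m (A + B) = 0 -> A *m B = B *m A ->
  (A - a%:M) ^+ N *m v = 0 -> (B - b%:M) ^+ N *m v = 0 -> a + b != 0 ->
  E *m v = 0.
Proof.
move=> hE cAB hA hB hs.
have H2 := sum_nil _ _ _ _ (comm_shift A B a b cAB) hA hB.
have eZ : A - a%:M + (B - b%:M) = (A + B) - (a + b)%:M.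
  by rewrite raddfD /= opprD !addrA (addrAC A).
have H3 : forall m, E *m (A + B - (a + b)%:M) ^+ m = (- (a + b)) ^+ m *: E.
  elim=> [|m IH]; first by rewrite !expr0 mulmx1 scale1r.
  rewrite exprSr -mulmxE mulmxA IH -scalemxAl mulmxBr hE mul_mx_scalar sub0r.
  by rewrite -scaleNr scalerA exprSr.
have : E *m ((A - a%:M + (B - b%:M)) ^+ (N + N) *m v) = 0 by rewrite H2 mulmx0.
rewrite eZ mulmxA H3 -scalemxAl => /eqP; rewrite scalemx_eq0 expf_eq0 oppr_eq0.
by rewrite (negbTE hs) andbF /= => /eqP.
Qed.

End Mx.

Section Diag.
Variable n : nat.
Variable k : 'I_n.
Hypothesis hk : (k.+1 < n)%N.

Lemma val_nxt : val (nxt k) = k.+1.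
Proof. by rewrite /nxt val_insubd hk. Qed.

Lemma nxt_neq : nxt k != k.
Proof. by apply/eqP => /(congr1 val) /eqP; rewrite val_nxt gtn_eqF. Qed.

Lemma swK i : sw k (sw k i) = i.
Proof. by rewrite /sw tpermK. Qed.

Lemma sw_inj : injective (sw k).
Proof. exact: (can_inj swK). Qed.

Lemma swD i : i != k -> i != nxt k -> sw k i = i.
Proof. by move=> h1 h2; rewrite /sw tpermD // eq_sym. Qed.

Lemma inSeq_sw r (c : lab n) : inSeq r c -> inSeq r (swlab k c).
Proof.
rewrite /inSeq => /eqP <-; apply/eqP.
rewrite -(card_image sw_inj [pred i | swlab k c i]).
apply: eq_card => i; rewrite inE; apply/imageP/idP.
  by case=> j; rewrite inE ffunE => hj ->.
by move=> hi; exists (sw k i); rewrite ?inE ?ffunE swK.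
Qed.

Lemma ok_bid r (b : lab n) : inSeq r b -> bdiag_ok r (bid b).
Proof.
move=> hb; rewrite /bdiag_ok /= hb /=; apply/forallP => [[i|i]] /=;
  by rewrite /idmat !ffunE /= !eqxx.
Qed.

Lemma inl_eq (x y : 'I_n) : (inl x == inl y :> pt n) = (x == y).
Proof. by apply/eqP/eqP => [[]|->]. Qed.
Lemma inr_eq (x y : 'I_n) : (inr x == inr y :> pt n) = (x == y).
Proof. by apply/eqP/eqP => [[]|->]. Qed.

Lemma ok_cup r (c d : lab n) : inSeq r c -> inSeq r d ->
  c k != c (nxt k) -> d k != d (nxt k) ->
  (forall i, i != k -> i != nxt k -> d i = c i) ->
  bdiag_ok r (BDiag c d (cupmat k)).
Proof.
move=> hc hd hck hdk hdc; rewrite /bdiag_ok /= hc hd /=.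
have nk := nxt_neq.
have s1 : sw k k = nxt k by rewrite /sw tpermL.
have s2 : sw k (nxt k) = k by rewrite /sw tpermR.
apply/forallP => -[i|i] /=; rewrite /cupmat !ffunE;
  (have [->|h1] := eqVneq i k; [|have [->|h2] := eqVneq i (nxt k)]);
  rewrite ?eqxx ?orbT ?s1 ?s2 /= ?ffunE ?eqxx ?orbT ?s1 ?s2 /= ?inl_eq ?inr_eq ?eqxx /=.
all: try rewrite (negbTE h1) (negbTE h2) /= ?ffunE ?(negbTE h1) ?(negbTE h2) /= ?inl_eq ?inr_eq ?eqxx /=.
all: rewrite ?s1 ?s2 //.
all: try by rewrite ?nk ?(eq_sym k) ?nk ?hck ?hdk // eq_sym.
all: try by rewrite hdc.


Qed.

End Diag.

Section Proj.
Variables (r t : nat) (dim : nat) (om : C).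
Local Notation n := (r + t).
Variable rho : bdiag n -> 'M[C]_dim.
Hypothesis Hmul : forall d1 d2 : bdiag n, bdiag_ok r d1 -> bdiag_ok r d2 ->
        rho d1 *m rho d2 =
        if btop d2 == bbot d1 then (om ^+ bloops d1 d2) *: rho (bcomp d1 d2)
        else 0.
Hypothesis Hsum : \sum_(a : lab n | inSeq r a) rho (bid a) = 1%:M.

Lemma op_proj (D : lab n -> bdiag n) (Q : pred (lab n)) (g : lab n -> lab n) a :
  (forall c, bbot (D c) = c) -> (forall c, btop (D c) = g c) ->
  (forall c, inSeq r c -> Q c -> bdiag_ok r (D c)) ->
  inSeq r a -> inSeq r (g a) ->
  (\sum_(c | inSeq r c && Q c) rho (D c)) *m rho (bid a) =
  rho (bid (g a)) *m ((\sum_(c | inSeq r c && Q c) rho (D c)) *m rho (bid a)).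
Proof.
move=> hb ht hok ha hga.
set X := (_ *m _).
rewrite -[LHS]mul1mx -Hsum mulmx_suml (bigD1 (g a)) //= big1 ?addr0 //.
move=> b /andP [hbS hbne].
rewrite /X mulmx_suml mulmx_sumr big1 // => c /andP [hc hQ].
have okc := hok c hc hQ.
have [ec|nec] := eqVneq c a.
  rewrite mulmxA Hmul ?ok_bid //= ht ec eq_sym (negbTE hbne) mul0mx //.
rewrite Hmul ?ok_bid //= hb eq_sym (negbTE nec) mulmx0 //.
Qed.
End Proj.

Section Mx2.
Variable F : fieldType.
Variable d : nat.
Implicit Types (A B Z : 'M[F]_d) (y : 'cV[F]_d).

Lemma comm_pow A B (c : F) N : A *m B = B *m A ->
  (A - c%:M) ^+ N *m B = B *m (A - c%:M) ^+ N.
Proof.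
move=> h.
have h1 : GRing.comm B (A - c%:M).
  by rewrite /GRing.comm -!mulmxE mulmxBl mulmxBr h scalar_mxC.
by rewrite mulmxE; apply: commr_sym; apply: commrX.
Qed.

Lemma negpow A Z (l : F) m : A *m Z = Z *m A -> forall y, Z *m y = 0 ->
  (Z - A + l%:M) ^+ m *m y = (-1) ^+ m *: ((A - l%:M) ^+ m *m y).
Proof.
move=> cAZ; elim: m => [|m IH] y hy; first by rewrite !expr0 !mul1mx scale1r.
rewrite exprSr -mulmxE -mulmxA.
have -> : (Z - A + l%:M) *m y = - ((A - l%:M) *m y).
  by rewrite !mulmxDl hy !mulNmx add0r opprD opprK.
rewrite mulmxN IH; last by rewrite mulmxA mulmxBr -cAZ scalar_mxC -mulmxBl -mulmxA hy mulmx0.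
by rewrite !exprSr mulrN1 scaleNr -mulmxE mulmxA.
Qed.
End Mx2.

Lemma case2 r t d (rho : bdiag (r + t) -> 'M[C]_d.+1) (Y : 'I_(r + t) -> 'M[C]_d.+1)
  (a' : lab (r + t)) (Op : 'M[C]_d.+1) (k : 'I_(r + t)) (w : 'I_(r + t) -> C)
  (v : 'cV[C]_d.+1) N :
  (forall i j, commutes (Y i) (Y j)) ->
  (forall i, commutes (Y i) (One rho a')) ->
  (Y k + Y (nxt k)) *m Op = 0 ->
  (forall j, j != k -> j != nxt k -> commutes (Y j) Op) ->
  nxt k != k ->
  (forall j, (Y j - (w j)%:M) ^+ N *m v = 0) ->
  (exists u, Op *m v = One rho a' *m u) ->
  in_wsp_sum rho Y (Iset k w) a' (Op *m v).
Proof.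
move=> HYY HYO HZ HYOp nk HN [u hu].
set x := Op *m v. set A := Y k.
have [s hs] := closed_field_poly_normal (char_poly A).
rewrite (monicP (char_poly_monic A)) scale1r in hs.
have CH := Cayley_Hamilton A.
have key : forall p, char_poly A %| p -> horner_mx A p = 0.
  by move=> p /dvdpP [q ->]; rewrite rmorphM /= CH mulr0.
have [L [HL1 HL2]] := poly_decomp _ s.
rewrite -hs in HL1 HL2.
set Z := Y k + Y (nxt k).
have hZx : Z *m x = 0 by rewrite /x mulmxA HZ mul0mx.
have cAZ : A *m Z = Z *m A.
  by rewrite /Z mulmxDl mulmxDr (HYY (nxt k) k).
pose x0 := (0 : C, 0 : {poly C}).
exists (size L), (fun l => fun j => if j == k then (nth x0 L l).1
                    else if j == nxt k then - (nth x0 L l).1 else w j),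
  (fun l => horner_mx A (nth x0 L l).2 *m x).
split; last first.
  rewrite -(big_mkord xpredT (fun l => horner_mx A (nth x0 L l).2 *m x)).
  rewrite -(big_nth x0 xpredT (fun pr => horner_mx A pr.2 *m x)).
  rewrite -mulmx_suml -rmorph_sum.
  have := key _ HL1; rewrite rmorphB rmorph1 /= => /eqP; rewrite subr_eq0 => /eqP <-.
  by rewrite mul1mx.
move=> l; set pr := nth x0 L l.
have prin : pr \in L by apply: mem_nth.
set H := horner_mx A pr.2.
have hq : (A - pr.1%:M) ^+ size s *m H = 0.
  rewrite -(key _ (HL2 _ prin)) rmorphM rmorphXn rmorphB /= horner_mx_X horner_mx_C.
  by rewrite mulmxE.
have hk' : (A - pr.1%:M) ^+ (N + size s) *m (H *m x) = 0.
  by rewrite exprD -mulmxE -!mulmxA (mulmxA (_ ^+ size s)) hq mul0mx mulmx0.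
split.
  split => [j h1 h2|] /=; first by rewrite (negbTE h1) (negbTE h2).
  by rewrite eqxx (negbTE nk) eqxx subrr.
split.
  exists (H *m u); rewrite /x hu /H !mulmxA; congr (_ *m _).
  by apply: comm_horner_mx; apply: HYO.
exists (N + size s) => j /=.
have [->|h1] := eqVneq j k; first exact: hk'.
have [->|h2] := eqVneq j (nxt k).

  have -> : Y (nxt k) - (- pr.1)%:M = Z - A + pr.1%:M.
    by rewrite /Z /A (addrC (Y k)) addrK raddfN /= opprK.
  rewrite negpow //; first by rewrite hk' scaler0.
  rewrite mulmxA; have -> : Z *m H = H *m Z.
    by apply: comm_mx_horner; rewrite /comm_mx -cAZ.
  by rewrite -mulmxA hZx mulmx0.
idtac.
rewrite (_ : (N + size s)%R = (size s + N)%N); last by apply: addnC.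
rewrite exprD -mulmxE -mulmxA; set G := (Y j - _) ^+ N.
have cG : G *m H = H *m G.
  by apply: comm_mx_horner; rewrite /comm_mx /G comm_pow //; apply: HYY.
have cG2 : G *m Op = Op *m G by rewrite /G comm_pow //; apply: HYOp.
by rewrite /x (mulmxA G) cG -mulmxA (mulmxA G) cG2 -mulmxA HN !mulmx0.
Qed.

Theorem lemma3p2 (r t : nat) (om : nat -> C) (dim : nat)
  (rho : bdiag (r + t) -> 'M[C]_dim) (Y : 'I_(r + t) -> 'M[C]_dim) :
  is_VBr_module om rho Y ->
  forall (a : lab (r + t)) (k : 'I_(r + t)) (w : 'I_(r + t) -> C),
    inSeq r a -> (k.+1 < r + t)%N -> swlab k a != a ->
    (w k + w (nxt k) != 0 ->
       forall v : 'cV[C]_dim, in_wsp rho Y a w v ->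
         Eop rho k *m v = 0 /\ Ehat rho k *m v = 0) /\
    (w k + w (nxt k) = 0 ->
       forall v : 'cV[C]_dim, in_wsp rho Y a w v ->
         in_wsp_sum rho Y (Iset k w) a (Eop rho k *m v) /\
         in_wsp_sum rho Y (Iset k w) (swlab k a) (Ehat rho k *m v)).
Proof.
move: rho Y; case: dim => [|d] rho Y.
  move=> _ a k w _ _ _; split => _ v _; split; try by apply: flatmx0.
    by exists 0%N, (fun _ => w), (fun _ => 0); split; [case | rewrite big_ord0; apply: flatmx0].
  by exists 0%N, (fun _ => w), (fun _ => 0); split; [case | rewrite big_ord0; apply: flatmx0].
case=> Hmul Hsum HYY HYO [HYc He1 Hs Hsh Hann].
move=> a k w ha hk hsw.
have nk := nxt_neq _ _ hk.
have [hZE hEZ hZEh hEhZ] := Hann k hk.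
have hsa := inSeq_sw _ k _ _ ha.
split.
  move=> hs v [[u hu] [N HN]]; split.
    exact: (case1 _ _ _ _ _ _ _ _ N hZE (HYY k (nxt k)) (HN k) (HN (nxt k)) hs).
  exact: (case1 _ _ _ _ _ _ _ _ N hZEh (HYY k (nxt k)) (HN k) (HN (nxt k)) hs).
move=> _ v [[u hu] [N HN]].
have okE : forall c, inSeq r c -> c k != c (nxt k) -> bdiag_ok r (e_diag k c).
  by move=> c hc hQ; apply: (ok_cup _ _ hk).
have okEh : forall c, inSeq r c -> c k != c (nxt k) -> bdiag_ok r (ehat_diag k c).
  move=> c hc hQ; apply: (ok_cup _ _ hk) => //; first exact: inSeq_sw.
    by rewrite /= !ffunE /sw tpermL tpermR eq_sym.
  by move=> i h1 h2; rewrite /= ffunE swD.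
have hp := @op_proj r t d.+1 (om 0%N) rho Hmul Hsum
  (e_diag k) (fun c => c k != c (nxt k)) id a (fun _ => erefl) (fun _ => erefl) okE ha ha.
have hph := @op_proj r t d.+1 (om 0%N) rho Hmul Hsum
  (ehat_diag k) (fun c => c k != c (nxt k)) (swlab k) a (fun _ => erefl) (fun _ => erefl)
  okEh ha hsa.
split.
  apply: (@case2 _ _ _ _ _ _ _ _ _ _ N) => //.
  - by move=> i; apply: HYO.
  - by move=> j h1 h2; have [] := HYc k j hk h1 h2.
  - exists (Eop rho k *m One rho a *m u).
    by rewrite hu [LHS]mulmxA {1}hp ?mulmxA.
apply: (@case2 _ _ _ _ _ _ _ _ _ _ N) => //.
- by move=> i; apply: HYO.
- by move=> j h1 h2; have [] := HYc k j hk h1 h2.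
- exists (Ehat rho k *m One rho a *m u).
  by rewrite hu [LHS]mulmxA {1}hph ?mulmxA.
Qed.
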